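(* Consider the online bipartite matching problem with vertex updates on the right side, and let $\alpha>1$ be a real number such that at every time, $|N_H(A)|\ge\alpha|A|$ for every $A\subseteq L$. Then there is an algorithm for this problem with $O(\log_\alpha n)$-amortized recourse, where $n$ is the size of $L$ at the end.
   Context: Online bipartite matching with vertex updates on the right side: there is a bipartite graph $H=(L\uplus R,E_H)$, initially with $L=E_H=\emptyset$, which changes dynamically through three types of updates: (i) a new vertex is added to $L$ together with its incident edges; (ii) a new vertex is added to $R$ together with its incident edges; (iii) a vertex of $R$ is removed. At all times the algorithm must maintain a matching in $H$ covering all of $L$ (it is promised one exists). The algorithm has amortized recourse $\beta$ if the total number of times vertices of $L$ are (re)assigned to a vertex of $R$ is at most $\beta$ times the number of updates. $N_H(A)$ denotes the set of neighbors in $H$ of the vertices in $A$. *)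

(* Defs.v *)
From mathcomp Require Import all_boot.
From Stdlib Require Import Reals.

Set Implicit Arguments.
Unset Strict Implicit.
Unset Printing Implicit Defensive.

(* Vertices of L and of R are identified by natural numbers (two separate
   namespaces).  An edge is a pair (v, u) with v in L and u in R. *)

Inductive update : Type :=
| AddL (v : nat) (nbrs : seq nat)
| AddR (u : nat) (nbrs : seq nat)
| DelR (u : nat).

Record graph : Type := Graph {
  Lv : seq nat;
  Rv : seq nat;
  Ev : seq (nat * nat) }.

Definition empty_graph : graph := Graph [::] [::] [::].

Definition apply_update (H : graph) (x : update) : graph :=
  match x with
  | AddL v N => Graph (v :: Lv H) (Rv H) ([seq (v, u) | u <- N] ++ Ev H)
  | AddR u N => Graph (Lv H) (u :: Rv H) ([seq (v, u) | v <- N] ++ Ev H)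
  | DelR u => Graph (Lv H) [seq w <- Rv H | w != u]
                    [seq e <- Ev H | e.2 != u]
  end.

Definition legal_update (H : graph) (x : update) : bool :=
  match x with
  | AddL v N => (v \notin Lv H) && all (fun u => u \in Rv H) N
  | AddR u N => (u \notin Rv H) && all (fun v => v \in Lv H) N
  | DelR u => u \in Rv H
  end.

Definition graph_at (us : seq update) (t : nat) : graph :=
  foldl apply_update empty_graph (take t us).

Definition legal_seq (us : seq update) : Prop :=
  forall t, t < size us -> legal_update (graph_at us t) (nth (DelR 0) us t).

Definition adj (H : graph) (v u : nat) : bool :=
  [&& v \in Lv H, u \in Rv H & (v, u) \in Ev H].

Definition nbhd (H : graph) (A : seq nat) : seq nat :=
  undup [seq u <- Rv H | has (fun v => adj H v u) A].

Definition expanding (alpha : R) (H : graph) : Prop :=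
  forall A : seq nat, uniq A -> {subset A <= Lv H} ->
    (alpha * INR (size A) <= INR (size (nbhd H A)))%R.

(* An assignment of left vertices to right vertices. *)
Definition assignment := nat -> option nat.

Definition covering_matching (H : graph) (M : assignment) : Prop :=
  (forall v, v \in Lv H -> exists2 u, M v = Some u & adj H v u) /\
  (forall v1 v2 u, v1 \in Lv H -> v2 \in Lv H ->
      M v1 = Some u -> M v2 = Some u -> v1 = v2).

(* A deterministic online algorithm: after each prefix of the update sequence
   it outputs the current matching (so the output at time t depends only on
   the first t updates). *)
Definition online_alg := seq update -> assignment.

Definition matching_at (alg : online_alg) (us : seq update) (t : nat) : assignment :=
  alg (take t us).

(* Number of (re)assignments at step t (1 <= t): the vertices of L at time t
   that are new, or whose assigned right vertex changed. *)
Definition reassignments (alg : online_alg) (us : seq update) (t : nat) : nat :=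
  count (fun v => (v \notin Lv (graph_at us t.-1)) ||
                  (matching_at alg us t v != matching_at alg us t.-1 v))
        (Lv (graph_at us t)).

Definition total_recourse (alg : online_alg) (us : seq update) : nat :=
  \sum_(1 <= t < (size us).+1) reassignments alg us t.

(* Main.v *)
Require Import Defs.
From mathcomp Require Import all_boot.
From Stdlib Require Import Reals Lra Classical ClassicalEpsilon ZArith Lia.

Set Implicit Arguments.
Unset Strict Implicit.
Unset Printing Implicit Defensive.

Definition changes (M M' : assignment) (s : seq nat) : nat :=
  count (fun z => M' z != M z) s.

Lemma count_sub (s t : seq nat) (a : pred nat) :
  uniq s -> (forall z, z \in s -> a z -> z \in t) -> count a s <= size t.
Proof.
rewrite -size_filter => us Hs; apply: uniq_leq_size; first exact: filter_uniq.
by move=> z; rewrite mem_filter => /andP[az zs]; exact: Hs.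
Qed.

Section Aug.
Variable H : graph.
Variable M : assignment.
Variable v0 : nat.
Hypothesis v0L : v0 \in Lv H.
Hypothesis Lu : uniq (Lv H).
Hypothesis Mmatch : forall y, y \in Lv H -> y != v0 -> exists2 u, M y = Some u & adj H y u.
Hypothesis Minj : forall y1 y2 u, y1 \in Lv H -> y2 \in Lv H -> y1 != v0 -> y2 != v0 ->
  M y1 = Some u -> M y2 = Some u -> y1 = y2.

Definition madj (w z : nat) : bool := if M z is Some u then adj H w u else false.

Fixpoint inS (k : nat) (z : nat) : bool :=
  if k is k'.+1 then inS k' z || [&& z \in Lv H, z != v0 &
      has (fun w => inS k' w && madj w z) (Lv H)]
  else z == v0.

Definition hole (M' : assignment) (w : nat) : Prop :=
  (forall y, y \in Lv H -> y != w -> exists2 u, M' y = Some u & adj H y u) /\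
  (forall y1 y2 u, y1 \in Lv H -> y2 \in Lv H -> y1 != w -> y2 != w ->
      M' y1 = Some u -> M' y2 = Some u -> y1 = y2).

Lemma inS_S k z : inS k z -> inS k.+1 z.
Proof. by move=> h /=; rewrite h. Qed.

Lemma inS_v0 k : inS k v0.
Proof. by elim: k => [|k IH] /=; rewrite ?eqxx ?IH. Qed.

Lemma path k w : inS k w -> exists M' P, [/\ hole M' w, size P <= k,
  (forall y, y \in P -> inS k y),
  (forall y, y \in Lv H -> y \notin P -> y != w -> M' y = M y) &
  (forall y u, y \in Lv H -> y != w -> M' y = Some u ->
     exists y', [/\ y' \in Lv H, y' != v0 & M y' = Some u])].
Proof.
elim: k w => [|k IH] w /=.
  move=> /eqP ->; exists M, [::]; split => //.
  by move=> y u yL yv e; exists y.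
case iw: (inS k w) => /=.
  have [M' [P [h sP iP uP vP]]] := IH w iw.
  exists M', P; split => //; first exact: leqW.
  by move=> y /iP /inS_S.
move=> /and3P[wL wv /hasP[w0 w0L /andP[iw0 mw]]].
move: mw; rewrite /madj; case Mw: (M w) => [u|] // aw0u.
have [M' [P [[hm hi] sP iP uP vP]]] := IH w0 iw0.
have wP : w \notin P by apply/negP => /iP; rewrite iw.
have ww0 : w != w0 by apply/negP => /eqP e; rewrite e iw0 in iw.
have M'w : M' w = Some u by rewrite uP.
exists (fun y => if y == w0 then Some u else if y == w then None else M' y), (w0 :: P).
split.
- split.
  + move=> y yL yw; case: eqP => [->|/eqP yw0]; first by exists u.
    by rewrite (negbTE yw); apply: hm.
  + move=> y1 y2 u' y1L y2L y1w y2w.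
    case: (eqVneq y1 w0) => [->|n1]; case: (eqVneq y2 w0) => [->|n2] //;
      rewrite ?(negbTE y1w) ?(negbTE y2w).
    * move=> [<-] e2; have := hi _ _ _ y2L wL n2 ww0 e2 M'w.
      by move=> e; rewrite e eqxx in y2w.
    * move=> e1 [e2]; rewrite -e2 in e1.
      have := hi _ _ _ y1L wL n1 ww0 e1 M'w.
      by move=> e; rewrite e eqxx in y1w.
    * exact: hi.
- by [].
- move=> y; rewrite inE => /orP[/eqP ->|/iP]; exact: inS_S.
- move=> y yL; rewrite inE negb_or => /andP[yw0 yP] yw.
  by rewrite (negbTE yw0) (negbTE yw); apply: uP.
- move=> y u' yL yw; case: eqP => [_ [<-]|/eqP yw0].
    by exists w; split.
  rewrite (negbTE yw); exact: vP.
Qed.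

Lemma found k w u : inS k w -> adj H w u ->
  (forall y, y \in Lv H -> y != v0 -> M y != Some u) ->
  exists Ms, covering_matching H Ms /\ changes M Ms (Lv H) <= k.+1.
Proof.
move=> iw awu fr.
have [M' [P [[hm hi] sP iP uP vP]]] := path iw.
exists (fun y => if y == w then Some u else M' y); split; first split.
- move=> y yL; case: eqP => [->|/eqP yw]; first by exists u.
  exact: hm.
- move=> y1 y2 u' y1L y2L.
  have key: forall y, y \in Lv H -> y != w -> M' y = Some u -> False.
    move=> y yL yw e; have [y' [y'L y'v e']] := vP _ _ yL yw e.
    by move: (fr _ y'L y'v); rewrite e' eqxx.
  case: (eqVneq y1 w) => [->|n1]; case: (eqVneq y2 w) => [->|n2] //.
  + by move=> [<-] e2; case: (key _ y2L n2 e2).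
  + by move=> e1 [e2]; rewrite -e2 in e1; case: (key _ y1L n1 e1).
  + exact: hi.
- rewrite /changes; apply: (@leq_trans (size (w :: P))); last by rewrite /= ltnS.
  apply: count_sub => // z zL /=; case: (eqVneq z w) => [-> _|zw]; first by rewrite inE eqxx.
  rewrite inE; case zP: (z \in P); first by rewrite orbT.
  by rewrite uP ?zP // eqxx.
Qed.

Definition Sk k := [seq z <- Lv H | inS k z].

Definition gpre (u : nat) : nat :=
  nth 0 (Lv H) (find (fun y => (y != v0) && (M y == Some u)) (Lv H)).

Lemma grow k :
  (forall w u, inS k w -> adj H w u ->
     exists2 y, y \in Lv H & (y != v0) && (M y == Some u)) ->
  (size (nbhd H (Sk k))).+1 <= size (Sk k.+1).
Proof.
move=> hyp; set N := nbhd H (Sk k).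
have gP: forall u, u \in N -> [/\ gpre u \in Lv H, gpre u != v0, M (gpre u) = Some u &
    exists2 w, w \in Lv H & inS k w && adj H w u].
  move=> u; rewrite /N /nbhd mem_undup mem_filter => /andP[/hasP[w wS awu] uR].
  move: wS; rewrite mem_filter => /andP[iw wL].
  have hh: has (fun y => (y != v0) && (M y == Some u)) (Lv H).
    by apply/hasP; have [y yL yP] := hyp w u iw awu; exists y.
  have := nth_find 0 hh; rewrite -/(gpre u) => /andP[gv /eqP gM].
  split => //; last by exists w => //; rewrite iw.
  by rewrite /gpre mem_nth // -has_find.
have -> : (size N).+1 = size (v0 :: map gpre N) by rewrite /= size_map.
apply: uniq_leq_size.
- rewrite /= map_inj_in_uniq ?undup_uniq; last first.
    move=> u1 u2 h1 h2 e; have [_ _ m1 _] := gP _ h1; have [_ _ m2 _] := gP _ h2.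
    by rewrite e m2 in m1; case: m1.
  rewrite andbT; apply/mapP => [[u uN e]]; have [_ gv _ _] := gP u uN.
  by rewrite -e eqxx in gv.
- move=> z; rewrite inE => /orP[/eqP->|/mapP[u uN ->]]; rewrite mem_filter.
    by rewrite inS_v0 v0L.
  have [gL gv gM [w wL /andP[iw awu]]] := gP u uN.
  rewrite gL andbT /= gL gv /=; apply/orP; right; apply/hasP; exists w => //.
  by rewrite iw /madj gM.
Qed.

Definition Found k := exists w u, [/\ inS k w, adj H w u &
  forall y, y \in Lv H -> y != v0 -> M y != Some u].

Variable alpha : R.
Hypothesis ha : (1 < alpha)%R.
Hypothesis expa : expanding alpha H.

Lemma pow_bound k : (forall k', k' < k -> ~ Found k') -> (alpha ^ k <= INR (size (Sk k)))%R.
Proof.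
elim: k => [|k IH] hk /=.
  have h : v0 \in Sk 0 by rewrite mem_filter /= eqxx v0L.
  have h1 : 0 < size (Sk 0) by move: h; case: (Sk 0).
  change 1%R with (INR 1); apply: le_INR; exact/leP.
have IH' := IH (fun k' lt => hk k' (leqW lt)).
have nf : ~ Found k by apply: hk.
have hyp : forall w u, inS k w -> adj H w u ->
     exists2 y, y \in Lv H & (y != v0) && (M y == Some u).
  move=> w u iw awu; apply: NNPP => nh; apply: nf; exists w, u; split => //.
  move=> y yL yv; apply/eqP => e; apply: nh; exists y => //.
  by rewrite yv e eqxx.
have g := grow hyp.
have e2 : (alpha * INR (size (Sk k)) <= INR (size (nbhd H (Sk k))))%R.
  apply: expa; first exact: filter_uniq.
  by move=> z; rewrite mem_filter => /andP[].
have e3 : (INR (size (nbhd H (Sk k))).+1 <= INR (size (Sk k.+1)))%R.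
  by apply: le_INR; apply/leP.
rewrite S_INR in e3.
have : (alpha * alpha ^ k <= alpha * INR (size (Sk k)))%R.
  apply: Rmult_le_compat_l; first lra; exact: IH'.
lra.
Qed.

Lemma aug K : (INR (size (Lv H)) < alpha ^ K)%R ->
  exists Ms, covering_matching H Ms /\ changes M Ms (Lv H) <= K.
Proof.
move=> hK.
case: (classic (exists k', k' < K /\ Found k')) => [[k' [lt [w [u [iw awu fr]]]]]|nf].
  have [Ms [c ch]] := found iw awu fr; exists Ms; split => //.
  exact: leq_trans ch lt.
have pb := pow_bound (fun k' lt f => nf (ex_intro _ k' (conj lt f))).
have : (INR (size (Sk K)) <= INR (size (Lv H)))%R.
  by apply: le_INR; apply/leP; rewrite size_filter count_size.
lra.
Qed.

End Aug.

Definition B (alpha : R) (n : nat) : nat := Z.to_nat (up (ln (INR n) / ln alpha)).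

Lemma ln0 : ln 0 = 0%R.
Proof. rewrite /ln; case: Rlt_dec => //= h; exfalso; lra. Qed.

Lemma lnINR_ge0 n : (0 <= ln (INR n))%R.
Proof.
case: n => [|n]; first by rewrite ln0; lra.
have h : (1 <= INR n.+1)%R by change 1%R with (INR 1); apply: le_INR; apply/leP.
case: (Req_dec (INR n.+1) 1) => [->|ne]; first by rewrite ln_1; lra.
rewrite -ln_1; left; apply: ln_increasing; lra.
Qed.

Lemma lnINR_mono n m : n <= m -> (ln (INR n) <= ln (INR m))%R.
Proof.
move=> le; case: n le => [|n] le; first by rewrite ln0; apply: lnINR_ge0.
have h : (INR n.+1 <= INR m)%R by apply: le_INR; apply/leP.
have h0 : (0 < INR n.+1)%R by apply: lt_0_INR; apply/ltP.
case: (Req_dec (INR n.+1) (INR m)) => [->|ne]; first lra.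
left; apply: ln_increasing; lra.
Qed.

Lemma lnpos alpha : (1 < alpha)%R -> (0 < ln alpha)%R.
Proof. move=> h; rewrite -ln_1; apply: ln_increasing; lra. Qed.

Lemma B_real alpha n : (1 < alpha)%R ->
  let x := (ln (INR n) / ln alpha)%R in
  [/\ (0 <= x)%R, INR (B alpha n) = IZR (up x), (x < IZR (up x))%R & (IZR (up x) <= x + 1)%R].
Proof.
move=> ha x.
have lp := lnpos ha.
have x0 : (0 <= x)%R.
  rewrite /x /Rdiv; apply: Rmult_le_pos; first exact: lnINR_ge0.
  left; apply: Rinv_0_lt_compat; lra.
have [a1 a2] := archimed x.
have upos : (0 <= up x)%Z by apply: le_IZR; lra.
split => //; last lra.
by rewrite /B -/x INR_IZR_INZ Z2Nat.id.
Qed.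

Lemma B_spec alpha n : (1 < alpha)%R -> 0 < n -> (INR n < alpha ^ (B alpha n))%R.
Proof.
move=> ha n0.
have [x0 eB lt le] := B_real n ha.
have lp := lnpos ha.
have np : (0 < INR n)%R by apply: lt_0_INR; apply/ltP.
apply: ln_lt_inv => //; first by apply: pow_lt; lra.
rewrite ln_pow; last lra.
rewrite eB.
set x := (ln (INR n) / ln alpha)%R in lt *.
have -> : ln (INR n) = (x * ln alpha)%R by rewrite /x; field; lra.
by apply: Rmult_lt_compat_r.
Qed.

Lemma B_mono alpha n m : (1 < alpha)%R -> n <= m -> B alpha n <= B alpha m.
Proof.
move=> ha le.
have [x0 eB lt le1] := B_real n ha.
have [y0 eB' lt' le'] := B_real m ha.
have xy : (ln (INR n) / ln alpha <= ln (INR m) / ln alpha)%R.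
  rewrite /Rdiv; apply: Rmult_le_compat_r; last exact: lnINR_mono.
  left; apply: Rinv_0_lt_compat; exact: lnpos.
apply/leP; apply: INR_le; rewrite eB eB'; apply: IZR_le.
case: (Z_le_gt_dec (up (ln (INR n) / ln alpha)) (up (ln (INR m) / ln alpha))) => // gt.
have : (up (ln (INR m) / ln alpha) + 1 <= up (ln (INR n) / ln alpha))%Z by lia.
move/IZR_le; rewrite plus_IZR; lra.
Qed.

Lemma changes0 M s : changes M M s = 0.
Proof. by elim: s => //= z s IH; rewrite eqxx. Qed.

Lemma step_ok alpha H M x : (1 < alpha)%R -> legal_update H x -> uniq (Lv H) ->
  covering_matching H M -> expanding alpha (apply_update H x) ->
  exists M', covering_matching (apply_update H x) M' /\
    changes M M' (Lv (apply_update H x)) <= B alpha (size (Lv (apply_update H x))).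
Proof.
move=> ha; case: x => [v N|u N|u] /= leg Lu [cm ci] ex.
- move: leg => /andP[vL _].
  apply: (@aug _ M v _ _ _ _ alpha) => //.
  + by rewrite /= inE eqxx.
  + by rewrite /= vL.
  + move=> y; rewrite /= inE => /orP[/eqP->|yL]; first by rewrite eqxx.
    move=> _; have [u Mu a] := cm y yL; exists u => //.
    by move: a; rewrite /adj /= inE mem_cat => /and3P[-> -> ->]; rewrite !orbT.
  + move=> y1 y2 u; rewrite /= !inE => /orP[/eqP->|y1L]; first by rewrite eqxx.
    move=> /orP[/eqP->|y2L]; first by rewrite eqxx.
    by move=> _ _; apply: ci.
  + apply: B_spec => //.
- exists M; rewrite changes0; split => //; split => //.
  move=> y yL; have [w Mw a] := cm y yL; exists w => //.
  by move: a; rewrite /adj /= inE mem_cat => /and3P[-> -> ->]; rewrite !orbT.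
- have adjD : forall y w, adj H y w -> w != u ->
     adj (Graph (Lv H) [seq w <- Rv H | w != u] [seq e <- Ev H | e.2 != u]) y w.
    by move=> y w; rewrite /adj /= !mem_filter /= => /and3P[-> -> ->] ->.
  case hh: (has (fun w => M w == Some u) (Lv H)).
  + set w := nth 0 (Lv H) (find (fun w => M w == Some u) (Lv H)).
    have wL : w \in Lv H by rewrite /w mem_nth // -has_find.
    have /eqP Mw : M w == Some u by rewrite /w; exact: (nth_find 0 hh).
    apply: (@aug _ M w _ _ _ _ alpha) => //.
    * move=> y yL yw; have [u' Mu a] := cm y yL; exists u' => //.
      apply: adjD => //; apply/eqP => e; rewrite e in Mu.
      by move: yw; rewrite (ci _ _ _ yL wL Mu Mw) eqxx.
    * by move=> y1 y2 u' y1L y2L _ _; apply: ci.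
    * by apply: B_spec => //; move: wL; case: (Lv H).
  + exists M; rewrite changes0; split => //; split => //.
    move=> y yL; have [w Mw a] := cm y yL; exists w => //.
    apply: adjD => //; apply/eqP => e; move/negbT: hh => /hasPn /(_ y yL).
    by rewrite Mw e eqxx.
Qed.

Definition stepA (alpha : R) (HM : graph * assignment) (x : update) : graph * assignment :=
  let H' := apply_update HM.1 x in
  (H', epsilon (inhabits HM.2) (fun M' => covering_matching H' M' /\
          changes HM.2 M' (Lv H') <= B alpha (size (Lv H')))).

Definition run (alpha : R) (p : seq update) : graph * assignment :=
  foldl (stepA alpha) (empty_graph, fun _ => None) p.

Definition algA (alpha : R) : online_alg := fun p => (run alpha p).2.

Lemma run_graph alpha p HM :
  (foldl (stepA alpha) HM p).1 = foldl apply_update HM.1 p.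
Proof. by elim: p HM => //= x p IH HM; rewrite IH. Qed.

Lemma count_or (a b : pred nat) s : count (fun z => a z || b z) s <= count a s + count b s.
Proof. by rewrite -count_predUI; exact: leq_addr. Qed.

Lemma count_new (s : seq nat) : count (fun z => z \notin s) s = 0.
Proof.
apply/eqP; rewrite eqn0Ngt -has_count; apply/hasPn => z zs /=.
by rewrite zs.
Qed.

Theorem theorem6 :
  exists C : R, (0 < C)%R /\
  forall alpha : R, (1 < alpha)%R ->
  exists alg : online_alg,
  forall us : seq update,
    legal_seq us ->
    (forall t, t <= size us -> expanding alpha (graph_at us t)) ->
    (forall t, t <= size us -> covering_matching (graph_at us t) (matching_at alg us t)) /\
    (INR (total_recourse alg us) <=
       C * (1 + ln (INR (size (Lv (graph_at us (size us))))) / ln alpha) * INR (size us))%R.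
Proof.
exists 2%R; split; first lra.
move=> alpha ha; exists (algA alpha) => us leg expa.
have gS : forall t, t < size us ->
    graph_at us t.+1 = apply_update (graph_at us t) (nth (DelR 0) us t).
  by move=> t lt; rewrite /graph_at (take_nth (DelR 0)) // foldl_rcons.
have mS : forall t, t < size us ->
    matching_at (algA alpha) us t.+1 =
    epsilon (inhabits (matching_at (algA alpha) us t))
      (fun M' => covering_matching (graph_at us t.+1) M' /\
          changes (matching_at (algA alpha) us t) M' (Lv (graph_at us t.+1))
            <= B alpha (size (Lv (graph_at us t.+1)))).
  move=> t lt; rewrite gS // /matching_at /algA /run (take_nth (DelR 0)) // foldl_rcons.
  by rewrite /stepA /= run_graph.
have inv : forall t, t <= size us ->
    uniq (Lv (graph_at us t)) /\ covering_matching (graph_at us t) (matching_at (algA alpha) us t).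
  elim=> [|t IH] lt.
    by rewrite /graph_at take0 /=.
  have [Lu cov] := IH (ltnW lt).
  have lg := leg t lt.
  split.
    rewrite gS //; move: lg; case: (nth (DelR 0) us t) => [v N|u N|u] /=.
    - by move=> /andP[-> _].
    - by [].
    - by [].
  rewrite mS //.
  have := step_ok ha lg Lu cov; rewrite -gS // => /(_ (expa _ lt)) ex.
  by case: (epsilon_spec (inhabits (matching_at (algA alpha) us t)) _ ex).
split; first by move=> t /inv [].
set N := size (Lv (graph_at us (size us))).
have mono : forall d t, t + d <= size us -> size (Lv (graph_at us t)) <= size (Lv (graph_at us (t + d))).
  elim=> [|d IH] t le; first by rewrite addn0.
  have le' : t + d < size us by rewrite addnS in le.
  apply: leq_trans (IH t (ltnW le')) _.
  rewrite addnS gS //.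
  by case: (nth (DelR 0) us (t + d)) => //= *.
have spec : forall t, t < size us ->
    covering_matching (graph_at us t.+1) (matching_at (algA alpha) us t.+1) /\
    changes (matching_at (algA alpha) us t) (matching_at (algA alpha) us t.+1)
      (Lv (graph_at us t.+1)) <= B alpha (size (Lv (graph_at us t.+1))).
  move=> t lt; have [Lu cov] := inv t (ltnW lt).
  rewrite mS //.
  have := step_ok ha (leg t lt) Lu cov; rewrite -gS // => /(_ (expa _ lt)) ex.
  exact: (epsilon_spec (inhabits (matching_at (algA alpha) us t)) _ ex).
have rb : forall t, t < size us -> reassignments (algA alpha) us t.+1 <= (B alpha N).+1.
  move=> t lt; rewrite /reassignments /=.
  apply: leq_trans (count_or _ _ _) _.
  rewrite -[(B alpha N).+1]add1n; apply: leq_add.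
    rewrite gS //; case: (nth (DelR 0) us t) => [v N'|u N'|u] /=; rewrite ?count_new //.
    by rewrite addn0 leq_b1.
  have [_ ch] := spec t lt.
  apply: leq_trans ch _; apply: B_mono => //.
  have := mono (size us - t.+1) t.+1; rewrite subnKC //; exact.
have tot : total_recourse (algA alpha) us <= size us * (B alpha N).+1.
  rewrite /total_recourse.
  apply: leq_trans (_ : _ <= \sum_(1 <= t < (size us).+1) (B alpha N).+1) _.
    rewrite big_nat_cond [X in _ <= X]big_nat_cond; apply: leq_sum => t /andP[/andP[t1 t2] _].
    case: t t1 t2 => // t _ t2; exact: rb.
  by rewrite sum_nat_const_nat subn1.
move/leP/le_INR: tot; rewrite mult_INR S_INR.
have [x0 eB _ le] := B_real N ha.
rewrite eB.
set x := (ln (INR N) / ln alpha)%R in x0 le *.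
have sp := pos_INR (size us).
have : (INR (size us) * (IZR (up x) + 1) <= INR (size us) * (x + 2))%R.
  by apply: Rmult_le_compat_l => //; lra.
nra.
Qed.
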